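(* Let $\mathcal R$ be a PTRS. If there exists an infinite sequence $(\mu_n)_{n\in\mathbb N}$ with $\mu_n\overset{\mathsf i}{\rightrightarrows}_{\mathcal R}\mu_{n+1}$ for all $n$ and $\lim_{n\to\infty}|\mu_n|_{\mathcal R}<1$, then there also exists an infinite sequence $(\mu'_n)_{n\in\mathbb N}$ with $\mu'_n\overset{\mathsf i}{\rightrightarrows}_{\mathcal R}\mu'_{n+1}$ for all $n$, $\mu'_0=\{1:t\}$ for some term $t$, and $\lim_{n\to\infty}|\mu'_n|_{\mathcal R}<1$.
   Context: Finite multi-distributions on a set $A$: finite multisets of pairs $(p:a)$, $0<p\le1$, with probabilities summing to $1$; $p\cdot\mu=\{(pq:a)\mid(q:a)\in\mu\}$. A PTRS is a finite set of rules $\ell\to\{p_1:r_1,\dots,p_k:r_k\}$ ($\ell$ non-variable, $\mathcal V(r_j)\subseteq\mathcal V(\ell)$). $s\overset{\mathsf i}{\to}_{\mathcal R}\{p_1:t_1,\dots,p_k:t_k\}$ if for a position $\pi$, rule and substitution $\sigma$: $s|_\pi=\ell\sigma$, every proper subterm of $\ell\sigma$ is in $\mathtt{NF}_{\mathcal R}$ (terms admitting no rewrite step), and $t_j=s[r_j\sigma]_\pi$. $\overset{\mathsf i}{\rightrightarrows}_{\mathcal R}$ is its lifting: the smallest relation on finite multi-distributions of terms with $\{1:t\}\rightrightarrows\{1:t\}$ for $t\in\mathtt{NF}_{\mathcal R}$, $\{1:t\}\rightrightarrows\mu$ if $t\overset{\mathsf i}{\to}_{\mathcal R}\mu$, and $\bigcup_jp_j\cdot\mu_j\rightrightarrows\bigcup_jp_j\cdot\nu_j$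 whenever $\mu_j\rightrightarrows\nu_j$, $p_j>0$, $\sum_jp_j=1$. $|\mu|_{\mathcal R}=\sum_{(p:t)\in\mu,\,t\in\mathtt{NF}_{\mathcal R}}p$. *)

(* Defs.v *)
From Stdlib Require Import Reals List Permutation ClassicalEpsilon.
Import ListNotations.
Open Scope R_scope.
Set Implicit Arguments.

Section PTRS.
Variables (F V : Type).

Inductive term : Type :=
| Var : V -> term
| Fun : F -> list term -> term.

Fixpoint subst (s : V -> term) (t : term) : term :=
  match t with
  | Var x => s x
  | Fun f ts => Fun f (map (subst s) ts)
  end.

Inductive occurs (x : V) : term -> Prop :=
| occ_var : occurs x (Var x)
| occ_fun f ts u : In u ts -> occurs x u -> occurs x (Fun f ts).

Inductive imm_sub : term -> term -> Prop :=
| imm_sub_in f ts u : In u ts -> imm_sub u (Fun f ts).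
Inductive proper_subterm : term -> term -> Prop :=
| ps_imm u t : imm_sub u t -> proper_subterm u t
| ps_trans u v t : imm_sub u v -> proper_subterm v t -> proper_subterm u t.

(* one-hole contexts; plug C s = C[s]_pi, with pi the position of the hole *)
Inductive ctx : Type :=
| Hole : ctx
| CFun : F -> list term -> ctx -> list term -> ctx.

Fixpoint plug (C : ctx) (s : term) : term :=
  match C with
  | Hole => s
  | CFun f l C' r => Fun f (l ++ plug C' s :: r)
  end.

(* finite multi-distributions represented as lists (multisets up to Permutation) *)
Definition mdist := list (R * term).

Definition is_mdist (mu : mdist) : Prop :=
  (forall p t, In (p, t) mu -> 0 < p <= 1) /\
  fold_right (fun pt acc => fst pt + acc) 0 mu = 1.

Definition scale (p : R) (mu : mdist) : mdist :=
  map (fun qt => (p * fst qt, snd qt)) mu.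

Record rule : Type := mkRule { lhs : term ; rhs : mdist }.

Definition wf_rule (rl : rule) : Prop :=
  (exists f ts, lhs rl = Fun f ts) /\
  is_mdist (rhs rl) /\
  (forall p r, In (p, r) (rhs rl) -> forall x, occurs x r -> occurs x (lhs rl)).

Definition PTRS (trs : list rule) : Prop := forall rl, In rl trs -> wf_rule rl.

Definition NF (trs : list rule) (t : term) : Prop :=
  ~ exists C rl s, In rl trs /\ t = plug C (subst s (lhs rl)).

Definition istep (trs : list rule) (t : term) (mu : mdist) : Prop :=
  exists C rl s, In rl trs /\
    t = plug C (subst s (lhs rl)) /\
    (forall u, proper_subterm u (subst s (lhs rl)) -> NF trs u) /\
    mu = map (fun pr => (fst pr, plug C (subst s (snd pr)))) (rhs rl).

Inductive ilift (trs : list rule) : mdist -> mdist -> Prop :=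
| ilift_nf t : NF trs t -> ilift trs [(1, t)] [(1, t)]
| ilift_step t mu : istep trs t mu -> ilift trs [(1, t)] mu
| ilift_comb (fam : list (R * mdist * mdist)) (mu nu : mdist) :
    (forall p m n, In (p, m, n) fam -> 0 < p /\ ilift trs m n) ->
    fold_right (fun x acc => fst (fst x) + acc) 0 fam = 1 ->
    Permutation mu (concat (map (fun x => scale (fst (fst x)) (snd (fst x))) fam)) ->
    Permutation nu (concat (map (fun x => scale (fst (fst x)) (snd x)) fam)) ->
    ilift trs mu nu.

Definition nf_mass (trs : list rule) (mu : mdist) : R :=
  fold_right (fun pt acc =>
    (if excluded_middle_informative (NF trs (snd pt)) then fst pt else 0) + acc) 0 mu.

End PTRS.

Arguments Hole {F V}.

(* Main.v *)
Require Import Defs.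
From Stdlib Require Import Reals List Permutation Lra ClassicalEpsilon.
Import ListNotations.
Open Scope R_scope.

Section S.
Variables F V : Type.
Variable trs : list (rule F V).
Notation term := (term F V).
Notation mdist := (mdist F V).

Definition base (t : term) (nu : mdist) : Prop :=
  (NF trs t /\ nu = [(1, t)]) \/ istep trs t nu.

Definition srcf (x : R * term * mdist) : R * term := (fst (fst x), snd (fst x)).
Definition tgtf (x : R * term * mdist) : mdist := scale (fst (fst x)) (snd x).

Definition estep (mu nu : mdist) : Prop := exists L : list (R * term * mdist),
  (forall p t n, In (p, t, n) L -> 0 < p /\ base t n) /\
  Permutation mu (map srcf L) /\
  Permutation nu (concat (map tgtf L)).

Definition msum (f : R * term -> R) (l : mdist) : R :=
  fold_right (fun pt acc => f pt + acc) 0 l.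
Definition Lsum (g : R * term * mdist -> R) (L : list (R * term * mdist)) : R :=
  fold_right (fun x acc => g x + acc) 0 L.

Lemma msum_app f a b : msum f (a ++ b) = msum f a + msum f b.
Proof. induction a; simpl; [lra|]. rewrite IHa; lra. Qed.

Lemma msum_perm f a b : Permutation a b -> msum f a = msum f b.
Proof. intro H; induction H; simpl; lra. Qed.

Lemma msum_map f h L : msum f (map h L) = Lsum (fun x => f (h x)) L.
Proof. induction L; simpl; congruence. Qed.

Lemma msum_concat f k L : msum f (concat (map k L)) = Lsum (fun x => msum f (k x)) L.
Proof. induction L; simpl; [reflexivity|]. rewrite msum_app, IHL; reflexivity. Qed.

Definition homog (f : R * term -> R) := forall c p t, f (c * p, t) = c * f (p, t).

Lemma msum_scale f c l : homog f -> msum f (scale c l) = c * msum f l.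
Proof. intro Hf; induction l as [|[p t] l IH]; simpl; [lra|]. rewrite Hf, IH; lra. Qed.

Lemma Lsum_le g h L : (forall x, In x L -> g x <= h x) -> Lsum g L <= Lsum h L.
Proof. induction L; simpl; intros; [lra|]. pose proof (H a (or_introl eq_refl)).
  assert (Lsum g L <= Lsum h L) by (apply IHL; auto). lra. Qed.

Lemma Lsum_ext g h L : (forall x, In x L -> g x = h x) -> Lsum g L = Lsum h L.
Proof. induction L; simpl; intros; [lra|]. rewrite H by auto. rewrite IHL by auto. lra. Qed.

Definition massf (pt : R * term) : R := fst pt.
Definition nff (pt : R * term) : R :=
  if excluded_middle_informative (NF trs (snd pt)) then fst pt else 0.

Lemma nf_mass_msum mu : nf_mass trs mu = msum nff mu.
Proof. reflexivity. Qed.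

Lemma homog_mass : homog massf. Proof. intros c p t; reflexivity. Qed.
Lemma homog_nf : homog nff.
Proof. intros c p t; unfold nff; simpl; destruct excluded_middle_informative; lra. Qed.

Lemma estep_perm a a' b b' : Permutation a a' -> Permutation b b' -> estep a b -> estep a' b'.
Proof.
  intros H1 H2 [L [HL [Ha Hb]]]. exists L; split; [exact HL| split].
  - eapply Permutation_trans; [apply Permutation_sym; eauto| auto].
  - eapply Permutation_trans; [apply Permutation_sym; eauto| auto].
Qed.

Lemma estep_nil : estep [] [].
Proof. exists []; simpl; repeat split; auto; intros; contradiction. Qed.

Lemma estep_app a b c d : estep a b -> estep c d -> estep (a ++ c) (b ++ d).
Proof.
  intros [L1 [H1 [Ha Hb]]] [L2 [H2 [Hc Hd]]]. exists (L1 ++ L2); split; [|split].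
  - intros p t n Hin; apply in_app_or in Hin; destruct Hin; eauto.
  - rewrite map_app; apply Permutation_app; auto.
  - rewrite map_app, concat_app; apply Permutation_app; auto.
Qed.

Lemma scale_scale c p (l : mdist) : scale c (scale p l) = scale (c * p) l.
Proof. unfold scale; rewrite map_map; apply map_ext; intros [q u]; simpl; f_equal; ring. Qed.

Lemma scale_concat c (L : list mdist) : scale c (concat L) = concat (map (scale c) L).
Proof. induction L; simpl; auto. unfold scale at 1; rewrite map_app; fold (scale c a); fold (scale c (concat L)). now rewrite IHL. Qed.

Lemma estep_scale c a b : 0 < c -> estep a b -> estep (scale c a) (scale c b).
Proof.
  intros Hc [L [H1 [Ha Hb]]].
  exists (map (fun x => (c * fst (fst x), snd (fst x), snd x)) L); split; [|split].
  - intros p t n Hin. apply in_map_iff in Hin as [[[q u] m] [E Hin]]. simpl in E.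
    inversion E; subst. destruct (H1 _ _ _ Hin). split; auto. apply Rmult_lt_0_compat; auto.
  - apply Permutation_trans with (scale c (map srcf L)). apply Permutation_map; auto.
    unfold scale, srcf; rewrite !map_map. apply Permutation_refl'; apply map_ext; reflexivity.
  - apply Permutation_trans with (scale c (concat (map tgtf L))). apply Permutation_map; auto.
    rewrite scale_concat, !map_map. apply Permutation_refl'. f_equal. apply map_ext.
    intros x. unfold tgtf; simpl. apply scale_scale.
Qed.

Lemma estep_split a b nu : estep (a ++ b) nu ->
  exists nu1 nu2, estep a nu1 /\ estep b nu2 /\ Permutation nu (nu1 ++ nu2).
Proof.
  intros [L [H1 [Ha Hb]]].
  destruct (Permutation_map_inv _ _ Ha) as [L3 [E HP]].
  destruct (map_eq_app _ _ _ _ (eq_sym E)) as [l1 [l2 [E2 [E3 E4]]]]. subst.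
  exists (concat (map tgtf l1)), (concat (map tgtf l2)); split; [|split].
  - exists l1; split; [|split; [apply Permutation_refl|apply Permutation_refl]]. intros p t n Hin; apply H1.
    apply Permutation_in with (l1 ++ l2); [symmetry; auto| apply in_or_app; auto].
  - exists l2; split; [|split; [apply Permutation_refl|apply Permutation_refl]]. intros p t n Hin; apply H1.
    apply Permutation_in with (l1 ++ l2); [symmetry; auto| apply in_or_app; auto].
  - eapply Permutation_trans; [exact Hb|]. rewrite <- concat_app, <- map_app.
    rewrite <- !flat_map_concat_map. apply Permutation_flat_map; auto.
Qed.

Lemma comb_estep (fam : list (R * mdist * mdist)) :
  (forall p m n, In (p, m, n) fam -> 0 < p /\ estep m n) ->
  estep (concat (map (fun x => scale (fst (fst x)) (snd (fst x))) fam))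
        (concat (map (fun x => scale (fst (fst x)) (snd x)) fam)).
Proof.
  induction fam as [|[[p m] n] fam IH]; intros H; simpl.
  - apply estep_nil.
  - apply estep_app.
    + destruct (H p m n (or_introl eq_refl)). apply estep_scale; auto.
    + apply IH; intros; apply H; right; auto.
Qed.

Lemma ilift_estep : forall mu nu, ilift trs mu nu -> estep mu nu.
Proof.
  fix IH 3. intros mu nu H. destruct H as [t Ht | t mu Ht | fam mu nu Hf Hs Hp1 Hp2].
  - exists [(1, t, [(1, t)])]; simpl; split; [|split].
    + intros p u n [E|[]]; inversion E; subst; split; [lra| left; auto].
    + apply Permutation_refl.
    + unfold tgtf, scale; simpl. rewrite Rmult_1_r. apply Permutation_refl.
  - exists [(1, t, mu)]; simpl; split; [|split].
    + intros p u n [E|[]]; inversion E; subst; split; [lra| right; auto].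
    + apply Permutation_refl.
    + unfold tgtf; simpl. rewrite app_nil_r.
      unfold scale. rewrite <- (map_id mu) at 1. apply Permutation_refl'.
      apply map_ext. intros [q u]; simpl; f_equal; ring.
  - eapply estep_perm; [symmetry; exact Hp1 | symmetry; exact Hp2 |].
    apply comb_estep. intros p m n Hin.
    destruct (Hf p m n Hin) as [Hp Hl]. split; [exact Hp| exact (IH _ _ Hl)].
Qed.


Lemma msum_nff_bounds l : (forall q u, In (q, u) l -> 0 <= q) ->
  0 <= msum nff l <= msum massf l.
Proof.
  induction l as [|[q u] l IH]; intros H; simpl; [lra|].
  assert (0 <= q) by (apply (H q u); left; auto).
  destruct IH as [IH1 IH2]. { intros; eapply H; right; eauto. }
  change (0 <= nff (q,u) + msum nff l <= massf (q,u) + msum massf l). assert (0 <= nff (q,u) <= massf (q,u)) by (unfold nff, massf; simpl; destruct excluded_middle_informative; lra). lra.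
Qed.

Lemma estep_src_pos mu nu : estep mu nu -> forall q u, In (q, u) mu -> 0 < q.
Proof.
  intros [L [H1 [Ha Hb]]] q u Hin. apply (Permutation_in _ Ha) in Hin.
  apply in_map_iff in Hin as [[[p t] n] [E Hin]]. unfold srcf in E; simpl in E.
  inversion E; subst. apply (H1 _ _ _ Hin).
Qed.

Lemma fam_mass (fam' : list (R * mdist * mdist)) :
  (forall p m n, In (p, m, n) fam' -> msum massf m = 1) ->
  msum massf (concat (map (fun x => scale (fst (fst x)) (snd (fst x))) fam')) =
  fold_right (fun x acc => fst (fst x) + acc) 0 fam'.
Proof.
  induction fam' as [|[[p m] n] fam' IHf]; intros Hf'; simpl; [reflexivity|].
  rewrite msum_app, msum_scale by apply homog_mass.
  rewrite (Hf' p m n (or_introl eq_refl)), IHf; [ring|]. intros; eapply Hf'; right; eauto.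
Qed.

Lemma ilift_mass : forall mu nu, ilift trs mu nu -> msum massf mu = 1.
Proof.
  fix IH 3. intros mu nu H. destruct H as [t Ht | t mu Ht | fam mu nu Hf Hs Hp1 Hp2].
  - unfold msum, massf; simpl; lra.
  - unfold msum, massf; simpl; lra.
  - rewrite (msum_perm _ _ _ Hp1). rewrite <- Hs. apply fam_mass.
    intros p m n Hin. destruct (Hf p m n Hin) as [_ Hl]. exact (IH _ _ Hl).
Qed.

Section WithPTRS.
Hypothesis HP : PTRS trs.

Lemma istep_notNF t n : istep trs t n -> ~ NF trs t.
Proof. intros [C [rl [s [Hin [E _]]]]] HN. apply HN. exists C, rl, s; auto. Qed.

Lemma base_pos t n : base t n -> forall q u, In (q, u) n -> 0 < q.
Proof.
  intros [[_ E]|[C [rl [s [Hin [E [_ E2]]]]]]] q u Hq.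
  - subst. destruct Hq as [E|[]]. inversion E; lra.
  - subst. apply in_map_iff in Hq as [[r v] [E3 Hq]]. simpl in E3. inversion E3; subst.
    destruct (HP rl Hin) as [_ [[Hpos _] _]]. apply (Hpos q v Hq).
Qed.

Lemma base_mass t n : base t n -> msum massf n = 1.
Proof.
  intros [[_ E]|[C [rl [s [Hin [E [_ E2]]]]]]].
  - subst. unfold msum, massf; simpl; lra.
  - subst. destruct (HP rl Hin) as [_ [[_ Hs] _]]. rewrite <- Hs.
    clear. induction (rhs rl); simpl; auto. unfold massf at 1; simpl. f_equal. exact IHm.
Qed.

Lemma estep_mass mu nu : estep mu nu -> msum massf nu = msum massf mu.
Proof.
  intros [L [H1 [Ha Hb]]]. rewrite (msum_perm _ _ _ Ha), (msum_perm _ _ _ Hb).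
  rewrite msum_map, msum_concat. apply Lsum_ext. intros [[p t] n] Hin.
  unfold tgtf, srcf; simpl. rewrite msum_scale by apply homog_mass.
  rewrite (base_mass t n) by (apply (H1 _ _ _ Hin)). unfold massf; simpl; ring.
Qed.

Lemma estep_mono mu nu : estep mu nu -> msum nff mu <= msum nff nu.
Proof.
  intros [L [H1 [Ha Hb]]]. rewrite (msum_perm _ _ _ Ha), (msum_perm _ _ _ Hb).
  rewrite msum_map, msum_concat. apply Lsum_le. intros [[p t] n] Hin.
  unfold tgtf, srcf; simpl. rewrite msum_scale by apply homog_nf.
  destruct (H1 _ _ _ Hin) as [Hp Hb'].
  unfold nff at 1; simpl. destruct excluded_middle_informative as [HN|HN].
  - destruct Hb' as [[_ E]|Hi]; [|exfalso; exact (istep_notNF _ _ Hi HN)].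
    subst. unfold msum, nff; simpl. destruct excluded_middle_informative; [lra|contradiction].
  - destruct (msum_nff_bounds n) as [B _].
    { intros q u Hq; apply Rlt_le; eapply base_pos; eauto. }
    apply Rmult_le_pos; lra.
Qed.

Lemma estep_ilift mu nu : estep mu nu -> msum massf mu = 1 -> ilift trs mu nu.
Proof.
  intros [L [H1 [Ha Hb]]] Hm.
  apply (ilift_comb (map (fun x => (fst (fst x), [(1, snd (fst x))], snd x)) L)).
  - intros p m n Hin. apply in_map_iff in Hin as [[[q t] k] [E Hin]]. simpl in E.
    inversion E; subst. destruct (H1 _ _ _ Hin) as [Hq [[HN E2]|Hi]]; split; auto.
    + subst; apply ilift_nf; auto.
    + apply ilift_step; auto.
  - transitivity (msum massf mu); [|exact Hm]. rewrite (msum_perm _ _ _ Ha). clear. induction L; simpl; auto.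
    rewrite IHL; reflexivity.
  - eapply Permutation_trans; [exact Ha|]. apply Permutation_refl'. clear.
    induction L as [|[[p t] n] L IH]; simpl; auto. unfold scale; simpl.
    rewrite Rmult_1_r. f_equal. exact IH.
  - rewrite map_map. exact Hb.
Qed.


Lemma cv_const c : Un_cv (fun _ => c) c.
Proof. intros e He; exists 0%nat; intros; unfold Rdist; rewrite Rminus_diag, Rabs_R0; lra. Qed.

Lemma Un_cv_ext u v l : (forall n, u n = v n) -> Un_cv u l -> Un_cv v l.
Proof. intros E H e He. destruct (H e He) as [N HN]. exists N; intros n Hn. rewrite <- E; auto. Qed.

Definition choose (nu a b : mdist) : mdist * mdist :=
  epsilon (inhabits ([], [])) (fun pr => estep a (fst pr) /\ estep b (snd pr) /\
                                         Permutation nu (fst pr ++ snd pr)).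

Fixpoint gseq (mu : nat -> mdist) (A B : mdist) (n : nat) : mdist * mdist :=
  match n with
  | O => (A, B)
  | S k => choose (mu (S k)) (fst (gseq mu A B k)) (snd (gseq mu A B k))
  end.

Lemma gseq_spec mu A B : Permutation (mu 0%nat) (A ++ B) ->
  (forall n, estep (mu n) (mu (S n))) ->
  forall n, Permutation (mu n) (fst (gseq mu A B n) ++ snd (gseq mu A B n)) /\
    estep (fst (gseq mu A B n)) (fst (gseq mu A B (S n))) /\
    estep (snd (gseq mu A B n)) (snd (gseq mu A B (S n))).
Proof.
  intros H0 Hs.
  assert (Hinv : forall n, Permutation (mu n) (fst (gseq mu A B n) ++ snd (gseq mu A B n))).
  { induction n; [exact H0|].
    assert (Hst : estep (fst (gseq mu A B n) ++ snd (gseq mu A B n)) (mu (S n))).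
    { eapply estep_perm; [exact IHn| apply Permutation_refl| apply Hs]. }
    destruct (estep_split _ _ _ Hst) as [n1 [n2 [E1 [E2 E3]]]].
    simpl. unfold choose.
    match goal with |- context [epsilon ?i ?P] =>
      destruct (epsilon_spec i P) as [_ [_ E]]; [exists (n1, n2); simpl; auto| exact E] end. }
  intro n. split; [apply Hinv|].
  assert (Hst : estep (fst (gseq mu A B n) ++ snd (gseq mu A B n)) (mu (S n))).
  { eapply estep_perm; [apply Hinv| apply Permutation_refl| apply Hs]. }
  destruct (estep_split _ _ _ Hst) as [n1 [n2 [E1 [E2 E3]]]].
  simpl. unfold choose.
  match goal with |- context [epsilon ?i ?P] =>
    destruct (epsilon_spec i P) as [F1 [F2 _]]; [exists (n1, n2); simpl; auto| auto] end.
Qed.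

Lemma chain_mass (s : nat -> mdist) : (forall n, estep (s n) (s (S n))) ->
  forall n, msum massf (s n) = msum massf (s 0%nat).
Proof. intros H n; induction n; auto. rewrite (estep_mass _ _ (H n)). auto. Qed.

Lemma chain_conv (s : nat -> mdist) : (forall n, estep (s n) (s (S n))) ->
  exists L, Un_cv (fun n => msum nff (s n)) L.
Proof.
  intros H. apply Un_cv_crit.
  - intro n; apply estep_mono, H.
  - exists (msum massf (s 0%nat)). intros x [i E]; subst.
    rewrite <- (chain_mass s H i). apply msum_nff_bounds.
    intros q u Hq; apply Rlt_le; eapply estep_src_pos; [apply H| eauto].
Qed.

Lemma key : forall mu0 (mu : nat -> mdist), Permutation (mu 0%nat) mu0 ->
  (forall n, estep (mu n) (mu (S n))) ->
  forall l, Un_cv (fun n => msum nff (mu n)) l -> l < msum massf mu0 ->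
  exists (mu' : nat -> mdist) (t : term),
    (forall n, ilift trs (mu' n) (mu' (S n))) /\
    mu' 0%nat = [(1, t)] /\
    exists l, Un_cv (fun n => nf_mass trs (mu' n)) l /\ l < 1.
Proof.
  induction mu0 as [|[p t] rest IH]; intros mu H0 Hs l Hl Hlt.
  - exfalso. assert (0 <= l).
    { apply (@Rle_cv_lim (fun _ => 0) (fun n => msum nff (mu n)) 0 l); [|apply cv_const| exact Hl].
      intro n; apply msum_nff_bounds. intros q u Hq; apply Rlt_le.
      eapply estep_src_pos; [apply Hs| eauto]. }
    unfold msum in Hlt; simpl in Hlt; lra.
  - assert (Hp : 0 < p).
    { eapply (estep_src_pos _ _ (Hs 0%nat) p t). apply Permutation_in with ((p, t) :: rest).
      symmetry; auto. left; auto. }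
    pose proof (gseq_spec mu [(p, t)] rest H0 Hs) as G.
    set (a := fun n => fst (gseq mu [(p, t)] rest n)).
    set (b := fun n => snd (gseq mu [(p, t)] rest n)).
    assert (Ha : forall n, estep (a n) (a (S n))) by (intro n; apply G).
    assert (Hb : forall n, estep (b n) (b (S n))) by (intro n; apply G).
    destruct (chain_conv a Ha) as [La HLa].
    destruct (chain_conv b Hb) as [Lb HLb].
    assert (Esum : l = La + Lb).
    { eapply UL_sequence; [exact Hl|]. eapply Un_cv_ext; [|apply (CV_plus _ _ _ _ HLa HLb)].
      intro n; simpl. rewrite (msum_perm _ _ _ (proj1 (G n))), msum_app. reflexivity. }
    assert (Ma : msum massf (a 0%nat) = p) by (unfold msum, massf; simpl; ring).
    assert (Mb : msum massf (b 0%nat) = msum massf rest) by reflexivity.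
    replace (msum massf ((p, t) :: rest)) with (p + msum massf rest) in Hlt by reflexivity.
    destruct (Rlt_or_le La p) as [HLp|HLp].
    + exists (fun n => scale (/ p) (a n)), t. split; [|split].
      * intro n. apply estep_ilift; [apply estep_scale; [apply Rinv_0_lt_compat; lra| apply Ha]|].
        rewrite msum_scale by apply homog_mass. rewrite (chain_mass a Ha n), Ma.
        apply Rinv_l; lra.
      * unfold scale; simpl. unfold a; simpl. rewrite Rinv_l by lra. reflexivity.
      * exists (/ p * La). split.
        -- eapply Un_cv_ext; [|apply (CV_mult _ _ _ _ (cv_const (/ p)) HLa)].
           intro n; simpl. rewrite nf_mass_msum, msum_scale by apply homog_nf. reflexivity.
        -- assert (/ p * La < / p * p) by (apply Rmult_lt_compat_l; [apply Rinv_0_lt_compat|]; lra).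
           rewrite Rinv_l in H by lra. exact H.
    + apply (IH b (Permutation_refl _) Hb Lb HLb). lra.
Qed.

End WithPTRS.
End S.

Theorem mainTheorem11 (F V : Type) (trs : list (rule F V)) :
  PTRS trs ->
  (exists mu : nat -> mdist F V,
      (forall n, ilift trs (mu n) (mu (S n))) /\
      exists l, Un_cv (fun n => nf_mass trs (mu n)) l /\ l < 1) ->
  exists (mu' : nat -> mdist F V) (t : term F V),
    (forall n, ilift trs (mu' n) (mu' (S n))) /\
    mu' 0%nat = [(1, t)] /\
    exists l, Un_cv (fun n => nf_mass trs (mu' n)) l /\ l < 1.
Proof.
  intros HP [mu [Hc [l [Hl Hl1]]]].
  apply (key F V trs HP (mu 0%nat) mu (Permutation_refl _)) with (l := l).
  - intro n; apply (ilift_estep F V trs), Hc.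
  - exact Hl.
  - rewrite (ilift_mass F V trs _ _ (Hc 0%nat)). exact Hl1.
Qed.
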